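(* Let $V\subset\mathbb{R}^n$ be starlike with respect to the origin, let $a\in V$, let $k\in\mathbb{N}$, let $P_k$ be a homogeneous polynomial of degree $k$ on $\mathbb{R}^n$, and let $L\ge0$. If $|P_k(v)|\le L$ for all $v\in a+V$, then $|P_k(v)|\le L$ for all $v\in\frac{1}{2e}V$.
   Context: $V$ starlike with respect to the origin means $sv\in V$ for all $v\in V$ and $s\in[0,1]$. $a+V=\{a+v: v\in V\}$ and $\lambda V=\{\lambda v: v\in V\}$. *)

(* Defs.v *)
From mathcomp Require Import all_boot.
From Stdlib Require Import Reals List.

Definition vec (n : nat) : Type := 'I_n -> R.

Definition starlike {n : nat} (V : vec n -> Prop) : Prop :=
  forall (v : vec n) (s : R), V v -> (0 <= s <= 1)%R -> V (fun i => (s * v i)%R).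

Definition monomial {n : nat} (alpha : 'I_n -> nat) (x : vec n) : R :=
  \big[Rmult/1%R]_(i < n) (x i ^ alpha i)%R.

Definition homogeneous_poly {n : nat} (k : nat) (P : vec n -> R) : Prop :=
  exists ms : list (R * ('I_n -> nat)),
    (forall m, List.In m ms -> (\sum_(i < n) (snd m) i)%N = k) /\
    (forall x : vec n,
       P x = List.fold_right (fun m acc => (fst m * monomial (snd m) x + acc)%R) 0%R ms).

(* Main.v *)
Require Import Defs.
From mathcomp Require Import all_boot.
From Stdlib Require Import Reals Lra Lia FunctionalExtensionality.
Open Scope R_scope.

Definition D (h : R) (f : R -> R) : R -> R := fun t => f (t + h) - f t.
Fixpoint iterDf (h : R) (m : nat) (f : R -> R) : R -> R :=
  match m with O => f | S m => iterDf h m (D h f) end.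
Fixpoint PD (d : nat) (c : R) (f : R -> R) : Prop :=
  match d with
  | O => forall t, f t = c
  | S d' => forall h, PD d' (INR (S d') * c * h) (D h f)
  end.

Lemma iterD_bound h : forall m L f t,
  (forall j, (j <= m)%coq_nat -> Rabs (f (t + INR j * h)) <= L) ->
  Rabs (iterDf h m f t) <= 2 ^ m * L.
Proof.
induction m as [|m IH]; intros L f t Hf.
- simpl. specialize (Hf O (le_n 0)). simpl in Hf.
  replace (t + 0 * h) with t in Hf by ring. lra.
- simpl. replace (2 * 2 ^ m * L) with (2 ^ m * (2 * L)) by ring.
  apply (IH (2 * L) (D h f) t). intros j Hj. unfold D.
  pose proof (Hf (S j) ltac:(lia)) as H1. pose proof (Hf j ltac:(lia)) as H2.
  rewrite S_INR in H1. replace (t + (INR j + 1) * h) with (t + INR j * h + h) in H1 by ring.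
  unfold Rminus. eapply Rle_trans. apply Rabs_triang. rewrite Rabs_Ropp. lra.
Qed.

Lemma iterD_PD h : forall d c f t, PD d c f -> iterDf h d f t = INR (Factorial.fact d) * h ^ d * c.
Proof.
induction d as [|d IH]; intros c f t H.
- simpl. rewrite H. ring.
- simpl iterDf. rewrite (IH _ _ t (H h)). rewrite fact_simpl mult_INR. simpl pow. ring.
Qed.

Lemma PD_ext : forall d c f g, (forall t, f t = g t) -> PD d c f -> PD d c g.
Proof.
induction d as [|d IH]; intros c f g E H.
- intro t. rewrite <- E. apply H.
- intro h. apply (IH _ (D h f)). intro t. unfold D. rewrite !E. reflexivity. apply H.
Qed.

Lemma PD_coef d c c' f : c = c' -> PD d c f -> PD d c' f.
Proof. intros ->; auto. Qed.

Lemma PD_zero : forall d, PD d 0 (fun _ => 0).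
Proof.
induction d as [|d IH].
- intro; reflexivity.
- intro h. apply (PD_coef d 0). ring. apply (PD_ext d 0 (fun _ => 0)).
  intro t; unfold D; ring. apply IH.
Qed.

Lemma PD_add : forall d c1 c2 f g, PD d c1 f -> PD d c2 g -> PD d (c1 + c2) (fun t => f t + g t).
Proof.
induction d as [|d IH]; intros c1 c2 f g H1 H2.
- intro t. rewrite H1 H2. reflexivity.
- intro h. eapply PD_coef; [|eapply PD_ext; [|apply (IH _ _ _ _ (H1 h) (H2 h))]].
  ring. intro t; unfold D; ring.
Qed.

Lemma PD_scal r : forall d c f, PD d c f -> PD d (r * c) (fun t => r * f t).
Proof.
induction d as [|d IH]; intros c f H.
- intro t. rewrite H. reflexivity.
- intro h. eapply PD_coef; [|eapply PD_ext; [|apply (IH _ _ (H h))]].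
  ring. intro t; unfold D; ring.
Qed.

Lemma PD_shift s : forall d c f, PD d c f -> PD d c (fun t => f (t + s)).
Proof.
induction d as [|d IH]; intros c f H.
- intro t. apply H.
- intro h. eapply PD_ext; [|apply (IH _ _ (H h))].
  intro t; unfold D. f_equal; f_equal; ring.
Qed.

Lemma PD_mul : forall N d1 d2 c1 c2 f g, Nat.add d1 d2 = N -> PD d1 c1 f -> PD d2 c2 g ->
  PD N (c1 * c2) (fun t => f t * g t).
Proof.
induction N as [|N IH]; intros d1 d2 c1 c2 f g E H1 H2.
- destruct d1; destruct d2; try (simpl in E; lia).
  intro t. simpl in *. rewrite H1 H2. reflexivity.
- destruct d1 as [|e1].
  + simpl in E. subst d2. eapply PD_ext; [|apply (PD_scal c1 _ _ _ H2)].
    intro t. simpl in H1. rewrite H1. reflexivity.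
  + destruct d2 as [|e2].
    * assert (e1 = N) by (rewrite Nat.add_0_r in E; lia). subst N. eapply PD_coef; [|eapply PD_ext; [|apply (PD_scal c2 _ _ _ H1)]].
      ring. intro t. simpl in H2. rewrite H2. ring.
    * intro h.
      assert (A1 := IH e1 (S e2) _ _ _ _ ltac:(simpl in E; lia) (H1 h) (PD_shift h _ _ _ H2)).
      assert (A2 := IH (S e1) e2 _ _ _ _ ltac:(simpl in E; lia) H1 (H2 h)).
      assert (ES : S N = Nat.add (S e1) (S e2)) by (simpl in *; lia).
      eapply PD_coef; [|eapply PD_ext; [|apply (PD_add _ _ _ _ _ A1 A2)]].
      rewrite ES plus_INR. ring.
      intro t; unfold D; simpl; ring.
Qed.

Lemma PD_lin a v : PD 1 v (fun t => a + t * v).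
Proof. intros h t. unfold D. simpl. ring. Qed.

Lemma PD_pow v f : PD 1 v f -> forall m, PD m (v ^ m) (fun t => f t ^ m).
Proof.
intros H; induction m as [|m IH].
- intro t. reflexivity.
- apply (PD_mul (S m) 1 m _ _ _ _ (erefl) H IH).
Qed.

Lemma PD_bigprod (n : nat) (al : 'I_n -> nat) (a v : vec n) : forall s : seq 'I_n,
  PD (\sum_(i <- s) al i)%N (\big[Rmult/1]_(i <- s) (v i ^ al i))
     (fun t => \big[Rmult/1]_(i <- s) ((a i + t * v i) ^ al i)).
Proof.
elim=> [|x s IH].
- eapply PD_ext; [|rewrite big_nil big_nil; apply (PD_coef 0 1 1); [reflexivity| intro t; reflexivity]].
  intro t. rewrite big_nil. reflexivity.
- eapply PD_ext; [|rewrite big_cons big_cons; apply (PD_mul _ _ _ _ _ _ _ (erefl) (PD_pow _ _ (PD_lin (a x) (v x)) (al x)) IH)].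
  intro t. rewrite big_cons. reflexivity.
Qed.

Lemma PD_poly (n k : nat) (P : vec n -> R) (a v : vec n) :
  homogeneous_poly k P -> PD k (P v) (fun t => P (fun i => a i + t * v i)).
Proof.
intros [ms [Hk HP]].
rewrite HP. eapply PD_ext; [intro t; rewrite HP; reflexivity|].
clear HP. induction ms as [|m ms IH].
- apply PD_zero.
- simpl. apply PD_add.
  + apply PD_scal. unfold monomial.
    rewrite <- (Hk m (or_introl erefl)).
    apply (PD_bigprod n (snd m) a v).
  + apply IH. intros m' Hm'. apply Hk. right; exact Hm'.
Qed.

Lemma exp_pow x : forall m, exp x ^ m = exp (INR m * x).
Proof.
induction m as [|m IH].
- simpl. rewrite Rmult_0_l exp_0. reflexivity.
- simpl pow. rewrite IH S_INR. rewrite <- exp_plus. f_equal. ring.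
Qed.

Lemma key : forall k, INR k ^ k <= INR (Factorial.fact k) * exp 1 ^ k.
Proof.
induction k as [|k IH].
- simpl. lra.
- assert (H1 : (INR k + 1) ^ k <= exp 1 * INR k ^ k).
  { destruct k as [|k].
    - simpl. pose proof (exp_ineq1_le 1). lra.
    - set (x := INR (S k)).
      assert (Hx : 0 < x) by (apply lt_0_INR; lia).
      replace (x + 1) with (x * (1 + / x)) by (field; lra).
      rewrite Rpow_mult_distr Rmult_comm. apply Rmult_le_compat_r.
      + apply pow_le; lra.
      + replace (exp 1) with (exp (/ x) ^ S k).
        * apply pow_incr. split. assert (0 < / x) by (apply Rinv_0_lt_compat; lra). lra.
          apply exp_ineq1_le.
        * rewrite exp_pow. f_equal. fold x. field. lra. }
  rewrite S_INR fact_simpl mult_INR S_INR.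
  simpl pow.
  assert (0 <= INR k) by apply pos_INR.
  assert (0 <= exp 1) by (left; apply exp_pos).
  apply Rle_trans with ((INR k + 1) * (exp 1 * INR k ^ k)).
  apply Rmult_le_compat_l; lra.
  replace ((INR k + 1) * INR (Factorial.fact k) * (exp 1 * exp 1 ^ k))
    with ((INR k + 1) * (exp 1 * (INR (Factorial.fact k) * exp 1 ^ k))) by ring.
  apply Rmult_le_compat_l; [lra|]. apply Rmult_le_compat_l; lra.
Qed.

Theorem lemma3p5 (n : nat) (V : vec n -> Prop) (a : vec n) (k : nat)
    (P : vec n -> R) (L : R) :
  starlike V -> V a -> homogeneous_poly k P -> (0 <= L)%R ->
  (forall w : vec n, V w -> (Rabs (P (fun i => a i + w i)) <= L)%R) ->
  forall w : vec n, V w ->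
    (Rabs (P (fun i => / (2 * exp 1) * w i)) <= L)%R.
Proof.
intros Hstar Ha Hhom HL Hbd w Hw.
assert (He : 0 < exp 1) by apply exp_pos.
set (c := / (2 * exp 1)).
set (u := fun i => c * w i).
change (Rabs (P u) <= L).
set (h := 2 * exp 1 / INR k).
set (f := fun t => P (fun i => a i + t * u i)).
assert (HPD : PD k (P u) f) by apply (PD_poly n k P a u Hhom).
assert (Hid := iterD_PD h k (P u) f 0 HPD).
assert (Hb : Rabs (iterDf h k f 0) <= 2 ^ k * L).
{ apply iterD_bound. intros j Hj.
  set (s := INR j / INR k).
  assert (Hs : 0 <= s <= 1).
  { destruct k as [|k'].
    - assert (j = O) by lia. subst j. unfold s. simpl. lra.
    - assert (0 < INR (S k')) by (apply lt_0_INR; lia).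
      assert (INR j <= INR (S k')) by (apply le_INR; exact Hj).
      assert (0 <= INR j) by apply pos_INR.
      unfold s. split.
      + apply Rmult_le_pos; [lra|]. left; apply Rinv_0_lt_compat; lra.
      + apply (Rmult_le_reg_r (INR (S k'))); [lra|].
        unfold Rdiv. rewrite Rmult_assoc Rinv_l; lra. }
  assert (E : (fun i => a i + (0 + INR j * h) * u i) = (fun i => a i + (fun i0 => s * w i0) i)).
  { apply functional_extensionality. intro i. unfold u, c, s, h, Rdiv.
    replace ((0 + INR j * (2 * exp 1 * / INR k)) * (/ (2 * exp 1) * w i))
      with (INR j * / INR k * ((2 * exp 1) * / (2 * exp 1)) * w i) by ring.
    rewrite Rinv_r; [ring|lra]. }
  unfold f. rewrite E. apply Hbd. apply Hstar; assumption. }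
rewrite Hid in Hb.
assert (Hk : 2 ^ k <= INR (Factorial.fact k) * h ^ k).
{ destruct k as [|k'].
  - simpl. lra.
  - assert (Hk0 : 0 < INR (S k')) by (apply lt_0_INR; lia).
    set (k := S k') in *.
    assert (Hkey := key k).
    unfold h, Rdiv. rewrite !Rpow_mult_distr.
    assert (AB : INR k ^ k * (/ INR k) ^ k = 1).
    { rewrite <- Rpow_mult_distr, Rinv_r; [apply pow1|lra]. }
    assert (B0 : 0 <= (/ INR k) ^ k) by (apply pow_le; left; apply Rinv_0_lt_compat; lra).
    assert (T0 : 0 <= 2 ^ k) by (apply pow_le; lra).
    apply Rle_trans with (2 ^ k * (INR k ^ k * (/ INR k) ^ k)); [rewrite AB; lra|].
    replace (INR (Factorial.fact k) * (2 ^ k * exp 1 ^ k * (/ INR k) ^ k))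
      with (2 ^ k * ((INR (Factorial.fact k) * exp 1 ^ k) * (/ INR k) ^ k)) by ring.
    apply Rmult_le_compat_l; [lra|]. apply Rmult_le_compat_r; lra. }
assert (F0 : 0 <= INR (Factorial.fact k) * h ^ k) by (apply Rle_trans with (2 ^ k); [apply pow_le; lra|exact Hk]).
assert (T1 : 0 < 2 ^ k) by (apply pow_lt; lra).
rewrite Rabs_mult (Rabs_right _ (Rle_ge _ _ F0)) in Hb.
assert (A0 : 0 <= Rabs (P u)) by apply Rabs_pos.
apply (Rmult_le_reg_l (2 ^ k)); [lra|].
apply Rle_trans with (INR (Factorial.fact k) * h ^ k * Rabs (P u)); [|lra].
rewrite (Rmult_comm (2 ^ k)). rewrite (Rmult_comm _ (Rabs _)). apply Rmult_le_compat_l; lra.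
Qed.
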